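(* Let $G$ have a RAAG-like action on the CAT(0) cube complex $X$, let $g\in G$ be hyperbolic and $o$ a vertex with $d^c(o,go)=\delta(g)$. Let $\gamma$ be a maximal $g$-nested segment in $[o,go]$, let $\phi_\gamma:G\to\mathbb R$, $\phi_\gamma(h)=\omega_\gamma(o,ho)$, and let $\overline\phi_\gamma(h)=\lim_{n\to\infty}\phi_\gamma(h^n)/n$ be its homogenisation. Then $\overline{\phi}_{\gamma}(g)\ge 1$.
   Context: $\mathcal{H}(X)$ is the set of halfspaces, $\overline\Phi$ the complement of $\Phi$. Two halfspaces are nested if one of $\Phi\subseteq\Psi$, $\overline{\Phi}\subseteq\Psi$, $\Phi\subseteq\overline{\Psi}$, $\overline{\Phi}\subseteq\overline{\Psi}$ holds, transverse otherwise; tightly nested means nested with no halfspace strictly in between for the relevant strict inclusion; $\Phi\supsetneq\Psi$ tightly means $\Phi\supsetneq\Psi$ and no $\Phi'$ has $\Phi\supsetneq\Phi'\supsetneq\Psi$. The action is RAAG-like if: (i) no $\Phi$, $h\in G$ with $h\overline\Phi=\Phi$; (ii) no $\Phi$, $h$ with $\Phi$, $h\Phi$ transverse; (iii) no tightly nested $\Phi,\Phi'$ and $h$ with $\Phi$, $h\Phi'$ transverse; (iv) no $\Phi$, $h$ with $\Phi\subsetneq h\overline\Phi$ tightly. $d^c$ is the combinatorial distance on vertices, $\delta(g)=\min_x d^c(x,gx)$, $g$ hyperbolic if $\delta(g)>0$. For vertices $x,y$, $[x,y]=\{\Phi: x\notin\Phi,\ y\in\Phi\}$. A segment is a finite sequence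 $\gamma=(\Phi_0,\dots,\Phi_r)$ of halfspaces with $\Phi_i\supsetneq\Phi_{i+1}$ tightly; its reverse is $\overline\gamma=(\overline\Phi_r,\dots,\overline\Phi_0)$; copies of $\gamma$ are $h\gamma=(h\Phi_0,\dots,h\Phi_r)$, $h\in G$. Two segments overlap if some halfspace of one is equal or transverse to some halfspace of the other. A segment is in $[x,y]$ if all its halfspaces lie in $[x,y]$. $c_\gamma(x,y)$ is the largest cardinality of a set of pairwise non-overlapping copies of $\gamma$ in $[x,y]$, and $\omega_\gamma(x,y)=c_\gamma(x,y)-c_{\overline\gamma}(x,y)$. For segments $\gamma=(\Phi_0,\dots,\Phi_r)$, $\gamma'=(\Psi_0,\dots,\Psi_s)$ write $\gamma>\gamma'$ if $\Phi_r\supsetneq\Psi_0$. A segment $\gamma$ in $[o,go]$ is $g$-nested if $\gamma>g\gamma$; it is maximal $g$-nested if no other $g$-nested segment in $[o,go]$ contains (all halfspaces of) $\gamma$. *)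

(* Defs.v *)
From Stdlib Require Import Reals List Arith ClassicalEpsilon.
Import ListNotations.
Open Scope R_scope.
Set Implicit Arguments.
Unset Strict Implicit.

(* The CAT(0) cube complex X is given through its 1-skeleton, which   *)
(* is a median graph (Chepoi / Roller / Gerasimov): vertices V, edge  *)
(* relation adj.                                                      *)
Section CubeComplex.
Variable V : Type.
Variable adj : V -> V -> Prop.

Inductive walk : V -> V -> nat -> Prop :=
| walk0 : forall x, walk x x 0
| walkS : forall x y z n, adj x y -> walk y z n -> walk x z (S n).

Definition dc (x y : V) : nat :=
  epsilon (inhabits 0%nat)
    (fun n => walk x y n /\ forall m, walk x y m -> (n <= m)%nat).

Record median_graph : Prop := {
  mg_sym : forall x y, adj x y -> adj y x;
  mg_irrefl : forall x, ~ adj x x;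
  mg_conn : forall x y, exists n, walk x y n;
  mg_median : forall x y z, exists m,
      (dc x m + dc m y = dc x y)%nat /\ (dc y m + dc m z = dc y z)%nat /\
      (dc x m + dc m z = dc x z)%nat /\
      forall m', (dc x m' + dc m' y = dc x y)%nat ->
                 (dc y m' + dc m' z = dc y z)%nat ->
                 (dc x m' + dc m' z = dc x z)%nat -> m' = m }.

(* halfspaces, as sets of vertices: the side of the hyperplane dual to
   the edge (a,b) that contains a *)
Definition hspace := V -> Prop.
Definition is_halfspace (P : hspace) : Prop :=
  exists a b, adj a b /\ P = (fun x => (dc x a < dc x b)%nat).

Definition hcompl (P : hspace) : hspace := fun x => ~ P x.
Definition hsub (P Q : hspace) : Prop := forall x, P x -> Q x.
Definition hssub (P Q : hspace) : Prop := hsub P Q /\ P <> Q.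
Definition tight_ssub (P Q : hspace) : Prop :=
  hssub P Q /\ ~ (exists R, is_halfspace R /\ hssub P R /\ hssub R Q).

Definition nested (P Q : hspace) : Prop :=
  hsub P Q \/ hsub (hcompl P) Q \/ hsub P (hcompl Q) \/ hsub (hcompl P) (hcompl Q).
Definition transverse (P Q : hspace) : Prop := ~ nested P Q.
Definition tightly_nested (P Q : hspace) : Prop :=
  tight_ssub P Q \/ tight_ssub (hcompl P) Q \/ tight_ssub P (hcompl Q) \/
  tight_ssub (hcompl P) (hcompl Q).

Definition in_interval (x y : V) (P : hspace) : Prop := ~ P x /\ P y.

Fixpoint tight_chain (l : list hspace) : Prop :=
  match l with
  | P :: ((Q :: _) as l') => tight_ssub Q P /\ tight_chain l'
  | _ => True
  end.
Definition segment (s : list hspace) : Prop :=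
  s <> [] /\ Forall is_halfspace s /\ tight_chain s.
Definition seg_rev (s : list hspace) : list hspace := map hcompl (rev s).
Definition seg_overlap (s t : list hspace) : Prop :=
  exists P Q, In P s /\ In Q t /\ (P = Q \/ transverse P Q).
Definition seg_in (x y : V) (s : list hspace) : Prop :=
  forall P, In P s -> in_interval x y P.
Definition seg_contains (big small : list hspace) : Prop :=
  forall P, In P small -> In P big.
Definition seg_gt (s t : list hspace) : Prop :=
  exists P Q, hd_error (rev s) = Some P /\ hd_error t = Some Q /\ hssub Q P.

End CubeComplex.

Section Action.
Variable G : Type.
Variable mul : G -> G -> G.
Variable one : G.
Variable inv : G -> G.
Variable V : Type.
Variable adj : V -> V -> Prop.
Variable act : G -> V -> V.

Record is_group : Prop := {
  g_assoc : forall a b c, mul a (mul b c) = mul (mul a b) c;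
  g_one_l : forall a, mul one a = a;
  g_one_r : forall a, mul a one = a;
  g_inv_l : forall a, mul (inv a) a = one;
  g_inv_r : forall a, mul a (inv a) = one }.

(* action by graph automorphisms (= cubical automorphisms of X) *)
Record is_action : Prop := {
  act_one : forall x, act one x = x;
  act_mul : forall a b x, act (mul a b) x = act a (act b x);
  act_adj : forall a x y, adj x y <-> adj (act a x) (act a y) }.

Fixpoint gpow (g : G) (n : nat) : G :=
  match n with O => one | S k => mul g (gpow g k) end.

Definition hs_act (h : G) (P : hspace V) : hspace V :=
  fun x => exists y, P y /\ act h y = x.
Definition seg_act (h : G) (s : list (hspace V)) : list (hspace V) :=
  map (hs_act h) s.

Definition delta (g : G) : nat :=
  epsilon (inhabits 0%nat)
    (fun n => (exists x, dc adj x (act g x) = n) /\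
              forall x, (n <= dc adj x (act g x))%nat).
Definition hyperbolic (g : G) : Prop := (0 < delta g)%nat.

Record raag_like : Prop := {
  rl1 : ~ exists P h, is_halfspace adj P /\ hs_act h (hcompl P) = P;
  rl2 : ~ exists P h, is_halfspace adj P /\ transverse P (hs_act h P);
  rl3 : ~ exists P P' h, is_halfspace adj P /\ is_halfspace adj P' /\
          tightly_nested adj P P' /\ transverse P (hs_act h P');
  rl4 : ~ exists P h, is_halfspace adj P /\ tight_ssub adj P (hs_act h (hcompl P)) }.

Definition admissible_copies (gam : list (hspace V)) (x y : V)
    (S : list (list (hspace V))) : Prop :=
  NoDup S /\
  (forall s, In s S -> (exists h, s = seg_act h gam) /\ seg_in x y s) /\
  (forall s t, In s S -> In t S -> s <> t -> ~ seg_overlap s t).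

Definition c_seg (gam : list (hspace V)) (x y : V) : nat :=
  epsilon (inhabits 0%nat)
    (fun n => (exists S, admissible_copies gam x y S /\ length S = n) /\
              forall S, admissible_copies gam x y S -> (length S <= n)%nat).

Definition omega (gam : list (hspace V)) (x y : V) : R :=
  INR (c_seg gam x y) - INR (c_seg (seg_rev gam) x y).

Definition phi (gam : list (hspace V)) (o : V) (h : G) : R :=
  omega gam o (act h o).

Definition g_nested (g : G) (o : V) (gam : list (hspace V)) : Prop :=
  segment adj gam /\ seg_in o (act g o) gam /\ seg_gt gam (seg_act g gam).

Definition max_g_nested (g : G) (o : V) (gam : list (hspace V)) : Prop :=
  g_nested g o gam /\
  forall gam', g_nested g o gam' -> seg_contains gam' gam -> gam' = gam.

End Action.

(* Main.v *)
Require Import Defs.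
From Stdlib Require Import Reals List Arith Lia Lra Classical ClassicalEpsilon FunctionalExtensionality PropExtensionality.
Import ListNotations.
Set Implicit Arguments.
Open Scope nat_scope.

Lemma nat_min_ex (P : nat -> Prop) : (exists n, P n) -> exists n, P n /\ forall m, P m -> (n <= m)%nat.
Proof.
  intros [n Hn]. revert Hn. induction n as [n IH] using lt_wf_ind. intro Hn.
  destruct (classic (exists m, P m /\ (m < n)%nat)) as [[m [Hm1 Hm2]]|H].
  - exact (IH m Hm2 Hm1).
  - exists n; split; auto. intros m Hm. destruct (le_lt_dec n m); auto. exfalso; eauto.
Qed.

Section Graph.
Variable V : Type.
Variable adj : V -> V -> Prop.
Variable HX : median_graph adj.

Notation d := (dc adj).
Notation wk := (walk adj).

Lemma walk_app x y z n m : wk x y n -> wk y z m -> wk x z (n + m).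
Proof. induction 1; intros; simpl; auto. econstructor; eauto. Qed.

Lemma walk_one x y : adj x y -> wk x y 1.
Proof. intros; econstructor; eauto; constructor. Qed.

Lemma walk_snoc x y z n : wk x y n -> adj y z -> wk x z (S n).
Proof. intros H1 H2. replace (S n) with (n+1)%nat by lia. eapply walk_app; eauto using walk_one. Qed.

Lemma walk_sym x y n : wk x y n -> wk y x n.
Proof. induction 1. constructor. eapply walk_snoc; eauto. apply (mg_sym HX); auto. Qed.

Lemma dc_spec x y : wk x y (d x y) /\ forall m, wk x y m -> (d x y <= m)%nat.
Proof.
  unfold dc. apply epsilon_spec. apply nat_min_ex. apply (mg_conn HX).
Qed.

Lemma dc_walk x y : wk x y (d x y). Proof. apply dc_spec. Qed.
Lemma dc_le x y m : wk x y m -> (d x y <= m)%nat. Proof. apply dc_spec. Qed.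

Lemma dc_sym x y : d x y = d y x.
Proof.
  apply Nat.le_antisymm; apply dc_le; apply walk_sym; apply dc_walk.
Qed.

Lemma dc_tri x y z : (d x z <= d x y + d y z)%nat.
Proof. apply dc_le. apply (walk_app (dc_walk x y) (dc_walk y z)). Qed.

Lemma dc_refl x : d x x = 0%nat.
Proof. pose proof (dc_le (walk0 adj x)). lia. Qed.

Lemma walk0_eq x y : wk x y 0 -> x = y.
Proof. inversion 1; auto. Qed.

Lemma dc_eq0 x y : d x y = 0%nat -> x = y.
Proof. intro H. pose proof (dc_walk x y). rewrite H in H0. apply walk0_eq; auto. Qed.

Lemma dc_adj x y : adj x y -> d x y = 1%nat.
Proof.
  intro H. pose proof (dc_le (walk_one H)).
  destruct (d x y) eqn:E; [|lia]. apply dc_eq0 in E. subst. exfalso; apply (mg_irrefl HX H).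
Qed.

Lemma dc_adj_le x a b : adj a b -> (d x b <= S (d x a))%nat.
Proof. intro H. pose proof (dc_tri x a b). rewrite (dc_adj H) in H0. lia. Qed.

Definition is_med x y z m := (d x m + d m y = d x y)%nat /\ (d y m + d m z = d y z)%nat /\
      (d x m + d m z = d x z)%nat.

Lemma med_ex x y z : exists m, is_med x y z m /\ forall m', is_med x y z m' -> m' = m.
Proof. destruct (mg_median HX x y z) as [m [H1 [H2 [H3 H4]]]]. exists m; split. repeat split; auto.
  intros m' [A [B C]]; auto. Qed.

Lemma med_uniq x y z m m' : is_med x y z m -> is_med x y z m' -> m = m'.
Proof. intros H H'. destruct (med_ex x y z) as [m0 [_ U]]. rewrite (U _ H), (U _ H'); auto. Qed.

Lemma bipartite x a b : adj a b -> d x a <> d x b.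
Proof.
  intros Hab E. destruct (med_ex x a b) as [m [[H1 [H2 H3]] _]].
  rewrite (dc_adj Hab) in H2.
  destruct (d a m) eqn:E1.
  - apply dc_eq0 in E1; subst m. rewrite dc_refl in *. lia.
  - assert (d m b = 0%nat) by lia. apply dc_eq0 in H. subst m. rewrite dc_refl in *. 
    pose proof (dc_adj (mg_sym HX Hab)). lia.
Qed.

Lemma adj_cases x a b : adj a b -> (d x b = S (d x a) \/ d x a = S (d x b)).
Proof.
  intro H. pose proof (dc_adj_le x H). pose proof (dc_adj_le x (mg_sym HX H)).
  pose proof (bipartite x H). lia.
Qed.

Definition W (a b : V) : hspace V := fun x => (d x a < d x b)%nat.

Lemma W_not a b x : adj a b -> ~ W a b x <-> W b a x.
Proof. intro H. unfold W. pose proof (adj_cases x H). lia. Qed.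

Lemma W_compl a b : adj a b -> hcompl (W a b) = W b a.
Proof. intro H. extensionality x. apply propositional_extensionality. apply W_not; auto. Qed.

Definition I x y z := (d x z + d z y = d x y)%nat.

Lemma W_interval a b x z : adj a b -> W a b x -> I x a z -> W a b z.
Proof.
  intros H Hx Hz. unfold W, I in *. pose proof (adj_cases x H). pose proof (adj_cases z H).
  pose proof (dc_tri x z b). lia.
Qed.

Lemma I_trans x y z w : I x y z -> I z y w -> I x y w.
Proof. unfold I; intros. pose proof (dc_tri x z w). pose proof (dc_tri x w y). lia. Qed.
Lemma I_trans2 x y z w : I x y z -> I x z w -> I x y w.
Proof. unfold I; intros. pose proof (dc_tri w z y). pose proof (dc_tri x w y). lia. Qed.
Lemma I_sym x y z : I x y z -> I y x z.
Proof. unfold I; intros. rewrite (dc_sym y z), (dc_sym z x), (dc_sym y x). lia. Qed.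

Lemma W_convex a b x y z : adj a b -> W a b x -> W a b y -> I x y z -> W a b z.
Proof.
  intros Hab Hx Hy Hz. apply NNPP; intro Hn. apply (W_not z Hab) in Hn.
  destruct (med_ex x z b) as [u [[U1 [U2 U3]] _]].
  assert (Hu : W b a u). { apply (@W_interval b a z u (mg_sym HX Hab) Hn). unfold I. lia. }
  assert (HuI : I x y u). { apply (I_trans2 (z:=z)); auto; unfold I; lia. }
  assert (Hub : I x b u). { unfold I; lia. }
  destruct (med_ex y u b) as [u' [[V1 [V2 V3]] _]].
  assert (Hu' : W b a u'). { apply (@W_interval b a u u' (mg_sym HX Hab) Hu). unfold I. lia. }
  assert (M1 : is_med x y b u').
  { assert (I x y u'). { apply I_sym. apply (I_trans2 (z:=u)). apply I_sym; auto. unfold I; lia. }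
    assert (I x b u'). { apply (I_trans (z:=u)); auto; unfold I; lia. }
    unfold is_med, I in *. lia. }
  destruct (med_ex x y a) as [m [[M1' [M2' M3']] _]].
  assert (Hm : W a b m). { apply (W_interval Hab Hx). unfold I; lia. }
  assert (M2 : is_med x y b m).
  { unfold W in *. pose proof (adj_cases x Hab). pose proof (adj_cases y Hab). pose proof (adj_cases m Hab).
    unfold is_med. lia. }
  rewrite (med_uniq M1 M2) in Hu'. apply (W_not m Hab) in Hu'. auto.
Qed.

Lemma W_sep a b u v : adj a b -> adj u v -> ~ W a b u -> W a b v -> W a b = W v u.
Proof.
  intros Hab Huv Hu Hv. extensionality x. apply propositional_extensionality. split; intro Hx.
  - apply NNPP; intro Hn. apply (W_not x (mg_sym HX Huv)) in Hn. apply Hu.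
    apply (W_convex Hab Hx Hv). unfold I, W in *. pose proof (dc_adj Huv). pose proof (adj_cases x Huv). lia.
  - apply NNPP; intro Hn. apply (W_not x Hab) in Hn. apply (W_not u Hab) in Hu.
    apply (W_not v Hab); auto. apply (W_convex (mg_sym HX Hab) Hn Hu). unfold I, W in *.
    pose proof (dc_adj (mg_sym HX Huv)). pose proof (adj_cases x Huv). lia.
Qed.

Lemma halfspace_W P : is_halfspace adj P -> exists a b, adj a b /\ P = W a b.
Proof. auto. Qed.

Lemma halfspace_sep P u v : is_halfspace adj P -> adj u v -> ~ P u -> P v -> P = W v u.
Proof. intros [a [b [Hab ->]]] Huv Hu Hv. apply W_sep; auto. Qed.

Lemma halfspace_compl P : is_halfspace adj P -> is_halfspace adj (hcompl P).
Proof. intros [a [b [Hab ->]]]. exists b, a. split. apply (mg_sym HX); auto. apply W_compl; auto. Qed.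

Lemma walk_halfspaces x y n : wk x y n -> exists L : list (hspace V), length L = n /\
   forall P, is_halfspace adj P -> ~ P x -> P y -> In P L.
Proof.
  induction 1 as [x|x y z n Hxy Hw IH].
  - exists []; split; auto.
  - destruct IH as [L [HL1 HL2]]. exists (W y x :: L). split. simpl; auto.
    intros P HP Hx Hz. destruct (classic (P y)).
    + left. symmetry. apply halfspace_sep; auto.
    + right. auto.
Qed.

End Graph.

Lemma hs_ext V (P Q : hspace V) : (forall x, P x <-> Q x) -> P = Q.
Proof. intro H. extensionality x. apply propositional_extensionality. auto. Qed.

Lemma compl_compl V (P : hspace V) : hcompl (hcompl P) = P.
Proof. apply hs_ext. intro x. unfold hcompl. split; [apply NNPP|auto]. Qed.

Lemma hsub_compl V (P Q : hspace V) : hsub P Q -> hsub (hcompl Q) (hcompl P).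
Proof. unfold hsub, hcompl; auto. Qed.

Lemma hsub_compl_inv V (P Q : hspace V) : hsub (hcompl Q) (hcompl P) -> hsub P Q.
Proof. unfold hsub, hcompl; intros H x Hx. apply NNPP; intro; apply (H x); auto. Qed.

Lemma hssub_compl V (P Q : hspace V) : hssub P Q -> hssub (hcompl Q) (hcompl P).
Proof. intros [H1 H2]. split. apply hsub_compl; auto. intro E. apply H2.
  rewrite <- (compl_compl P), <- (compl_compl Q), E; auto. Qed.

Lemma hsub_trans V (P Q R : hspace V) : hsub P Q -> hsub Q R -> hsub P R.
Proof. unfold hsub; auto. Qed.

Lemma hsub_antisym V (P Q : hspace V) : hsub P Q -> hsub Q P -> P = Q.
Proof. intros; apply hs_ext; split; auto. Qed.

Lemma hssub_trans_l V (P Q R : hspace V) : hssub P Q -> hsub Q R -> hssub P R.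
Proof. intros [H1 H2] H3. split. eapply hsub_trans; eauto. intro E; subst. apply H2. apply hsub_antisym; auto. Qed.
Lemma hssub_trans_r V (P Q R : hspace V) : hsub P Q -> hssub Q R -> hssub P R.
Proof. intros H1 [H2 H3]. split. eapply hsub_trans; eauto. intro E; subst. apply H3. apply hsub_antisym; auto. Qed.
Lemma hssub_irrefl V (P : hspace V) : ~ hssub P P.
Proof. intros [_ H]; auto. Qed.
Lemma hssub_asym V (P Q : hspace V) : hssub P Q -> ~ hsub Q P.
Proof. intros [H1 H2] H3. apply H2. apply hsub_antisym; auto. Qed.

Lemma nested_cmp V (P Q : hspace V) x y : nested P Q -> P x -> Q x -> ~ P y -> ~ Q y ->
  hsub P Q \/ hsub Q P.
Proof.
  unfold nested, hsub, hcompl. intros [H|[H|[H|H]]] Px Qx Py Qy; auto.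
  - exfalso. apply Qy; auto.
  - exfalso. apply (H x); auto.
  - right. intros z Hz. apply NNPP; intro. apply (H z); auto.
Qed.

Lemma transverse_compl_r V (P Q : hspace V) : transverse P (hcompl Q) -> transverse P Q.
Proof.
  unfold transverse, nested. intros H1 H2. apply H1.
  rewrite compl_compl. tauto.
Qed.
Lemma transverse_sym V (P Q : hspace V) : transverse P Q -> transverse Q P.
Proof.
  unfold transverse, nested. intros H1 H2. apply H1.
  destruct H2 as [H|[H|[H|H]]].
  - right; right; right. apply hsub_compl; auto.
  - right; left. intros x Hx. apply NNPP; intro Hq. apply Hx. apply H. exact Hq.
  - right; right; left. intros x Hx Hq. apply (H x Hq Hx).
  - left. apply hsub_compl_inv; auto.
Qed.

Section Act.
Variable V : Type.
Variable adj : V -> V -> Prop.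
Variable HX : median_graph adj.
Variable G : Type.
Variables (mul : G -> G -> G) (one : G) (inv : G -> G).
Variable HG : is_group mul one inv.
Variable act : G -> V -> V.
Variable Hact : is_action mul one adj act.

Notation d := (dc adj).
Notation hs := (hs_act act).

Lemma act_inv_l a x : act (inv a) (act a x) = x.
Proof. rewrite <- (act_mul Hact), (g_inv_l HG), (act_one Hact); auto. Qed.
Lemma act_inv_r a x : act a (act (inv a) x) = x.
Proof. rewrite <- (act_mul Hact), (g_inv_r HG), (act_one Hact); auto. Qed.

Lemma hs_char a P x : hs a P x <-> P (act (inv a) x).
Proof.
  unfold hs_act. split.
  - intros [y [Hy <-]]. rewrite act_inv_l; auto.
  - intro H. exists (act (inv a) x). split; auto. apply act_inv_r.
Qed.

Lemma hs_at a P y : hs a P (act a y) <-> P y.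
Proof. rewrite hs_char, act_inv_l. tauto. Qed.

Lemma walk_act a x y n : walk adj x y n -> walk adj (act a x) (act a y) n.
Proof. induction 1. constructor. econstructor; eauto. apply (act_adj Hact); auto. Qed.

Lemma dc_act a x y : d (act a x) (act a y) = d x y.
Proof.
  apply Nat.le_antisymm.
  - apply (dc_le HX). apply walk_act. apply (dc_walk HX).
  - pose proof (dc_le HX (walk_act (inv a) (dc_walk HX (act a x) (act a y)))) as H.
    rewrite !act_inv_l in H. exact H.
Qed.

Lemma hs_W a u v : hs a (W adj u v) = W adj (act a u) (act a v).
Proof.
  apply hs_ext. intro x. rewrite hs_char. unfold W.
  rewrite <- (dc_act a (act (inv a) x) u), <- (dc_act a (act (inv a) x) v), act_inv_r. tauto.
Qed.

Lemma hs_halfspace a P : is_halfspace adj P -> is_halfspace adj (hs a P).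
Proof.
  intros [u [v [Huv ->]]]. exists (act a u), (act a v). split.
  apply (act_adj Hact); auto. apply hs_W.
Qed.

Lemma hs_compl a P : hs a (hcompl P) = hcompl (hs a P).
Proof. apply hs_ext; intro x. rewrite hs_char. unfold hcompl. rewrite hs_char. tauto. Qed.

Lemma act_inv_mul a b x : act (inv (mul a b)) x = act (inv b) (act (inv a) x).
Proof.
  remember (act (inv (mul a b)) x) as y.
  assert (H : x = act (mul a b) y) by (subst y; rewrite act_inv_r; auto).
  rewrite H, (act_mul Hact), !act_inv_l. reflexivity.
Qed.

Lemma hs_mul a b P : hs (mul a b) P = hs a (hs b P).
Proof. apply hs_ext; intro x. rewrite !hs_char, act_inv_mul. tauto. Qed.

Lemma hs_one P : hs one P = P.
Proof. apply hs_ext; intro x. rewrite hs_char.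
  assert (E : act (inv one) x = x).
  { rewrite <- (act_one Hact (act (inv one) x)). apply act_inv_r. }
  rewrite E; tauto. Qed.

Lemma hs_inv_l a P : hs (inv a) (hs a P) = P.
Proof. rewrite <- hs_mul, (g_inv_l HG), hs_one. auto. Qed.
Lemma hs_inv_r a P : hs a (hs (inv a) P) = P.
Proof. rewrite <- hs_mul, (g_inv_r HG), hs_one. auto. Qed.

Lemma hs_sub a P Q : hsub P Q -> hsub (hs a P) (hs a Q).
Proof. intros H x. rewrite !hs_char. auto. Qed.
Lemma hs_sub_inv a P Q : hsub (hs a P) (hs a Q) -> hsub P Q.
Proof. intro H. rewrite <- (hs_inv_l a P), <- (hs_inv_l a Q). apply hs_sub; auto. Qed.
Lemma hs_inj a P Q : hs a P = hs a Q -> P = Q.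
Proof. intro E. rewrite <- (hs_inv_l a P), <- (hs_inv_l a Q), E. auto. Qed.
Lemma hs_ssub a P Q : hssub P Q -> hssub (hs a P) (hs a Q).
Proof. intros [H1 H2]. split. apply hs_sub; auto. intro E; apply H2; eapply hs_inj; eauto. Qed.
Lemma hs_ssub_inv a P Q : hssub (hs a P) (hs a Q) -> hssub P Q.
Proof. intro H. rewrite <- (hs_inv_l a P), <- (hs_inv_l a Q). apply hs_ssub; auto. Qed.

Lemma hs_tight a P Q : tight_ssub adj P Q -> tight_ssub adj (hs a P) (hs a Q).
Proof.
  intros [H1 H2]. split. apply hs_ssub; auto. intros [R [HR [A1 A2]]]. apply H2.
  exists (hs (inv a) R). split. apply hs_halfspace; auto.
  split; apply (hs_ssub_inv (a:=a)); rewrite hs_inv_r; auto.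
Qed.

Lemma tight_compl P Q : tight_ssub adj P Q -> tight_ssub adj (hcompl Q) (hcompl P).
Proof.
  intros [H1 H2]. split. apply hssub_compl; auto. intros [R [HR [A1 A2]]]. apply H2.
  exists (hcompl R). split. apply (halfspace_compl HX); auto.
  split. rewrite <- (compl_compl P). apply hssub_compl; auto.
  rewrite <- (compl_compl Q). apply hssub_compl; auto.
Qed.

Lemma hs_transverse a P Q : transverse P Q -> transverse (hs a P) (hs a Q).
Proof.
  unfold transverse, nested. intros H1 H2. apply H1.
  rewrite <- !hs_compl in H2.
  destruct H2 as [H|[H|[H|H]]]; apply hs_sub_inv in H; tauto.
Qed.

Variable Hraag : raag_like adj act.

Lemma RL1 a b P : is_halfspace adj P -> hs a (hcompl P) <> hs b P.
Proof.
  intros HP E. apply (rl1 Hraag). exists P, (mul (inv b) a). split; auto.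
  rewrite hs_mul, E, hs_inv_l. auto.
Qed.

Lemma RL2 a b P : is_halfspace adj P -> ~ transverse (hs a P) (hs b P).
Proof.
  intros HP T. apply (rl2 Hraag). exists P, (mul (inv a) b). split; auto.
  apply (hs_transverse (a:=inv a)) in T. rewrite hs_inv_l, <- hs_mul in T. auto.
Qed.

Lemma RL2c a b P : is_halfspace adj P -> ~ transverse (hs a P) (hs b (hcompl P)).
Proof. intros HP T. apply (RL2 (a:=a) (b:=b) HP). rewrite hs_compl in T. apply transverse_compl_r; auto. Qed.

Lemma RL3 a b P P' : is_halfspace adj P -> is_halfspace adj P' -> tight_ssub adj P P' ->
  ~ transverse (hs a P) (hs b P').
Proof.
  intros HP HP' Ht T. apply (rl3 Hraag). exists P, P', (mul (inv a) b). split; auto. split; auto.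
  split. left; auto.
  apply (hs_transverse (a:=inv a)) in T. rewrite hs_inv_l, <- hs_mul in T. auto.
Qed.

Lemma RL3c a b P P' : is_halfspace adj P -> is_halfspace adj P' -> tight_ssub adj P P' ->
  ~ transverse (hs a P) (hs b (hcompl P')).
Proof. intros HP HP' Ht T. apply (RL3 (a:=a) (b:=b) HP HP' Ht). rewrite hs_compl in T. apply transverse_compl_r; auto. Qed.

Lemma RL4 a b P Q : is_halfspace adj P -> is_halfspace adj Q -> tight_ssub adj Q P ->
  hs a (hcompl P) <> hs b Q.
Proof.
  intros HP HQ Ht E. apply (rl4 Hraag). exists (hcompl P), (mul (inv b) a).
  split. apply (halfspace_compl HX); auto.
  rewrite compl_compl.
  assert (E2 : hs (mul (inv b) a) P = hcompl Q).
  { assert (EQ : Q = hs (inv b) (hs a (hcompl P))). { rewrite E, hs_inv_l; auto. }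
    rewrite EQ, !hs_compl, compl_compl, hs_mul. auto. }
  rewrite E2. apply tight_compl; auto.
Qed.

End Act.

Section Skew.
Variable V : Type.
Variable adj : V -> V -> Prop.
Variable HX : median_graph adj.
Variable G : Type.
Variables (mul : G -> G -> G) (one : G) (inv : G -> G).
Variable HG : is_group mul one inv.
Variable act : G -> V -> V.
Variable Hact : is_action mul one adj act.
Variable Hraag : raag_like adj act.
Variable g : G.

Notation d := (dc adj).
Notation hs := (hs_act act).

Lemma walk_cross P x y n : walk adj x y n -> is_halfspace adj P -> ~ P x -> P y ->
  exists i u v k, walk adj x u i /\ adj u v /\ walk adj v y k /\ (i + 1 + k = n)%nat /\ P = W adj v u.
Proof.
  induction 1 as [x|x y z n Hxy Hw IH]; intros HP Hx Hy.
  - contradiction.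
  - destruct (classic (P y)) as [Py|Py].
    + exists 0%nat, x, y, n. split; [constructor|]. split; auto. split; auto. split; [lia|].
      apply (halfspace_sep HX); auto.
    + destruct (IH HP Py Hy) as [i [u [v [k [A1 [A2 [A3 [A4 A5]]]]]]]].
      exists (S i), u, v, k. split; [econstructor; eauto|]. split; auto. split; auto. split; [lia|]. auto.
Qed.

Definition minimal x := forall y, (d x (act g x) <= d y (act g y))%nat.

Lemma skew_first x x1 : minimal x -> adj x x1 -> (d x1 (act g x) + 1 = d x (act g x))%nat ->
  hssub (hs g (W adj x1 x)) (W adj x1 x) /\ d x1 (act g x1) = d x (act g x).
Proof.
  intros Hm Hxx1 Hd.
  set (P := W adj x1 x).
  assert (HP : is_halfspace adj P). { exists x1, x. split; auto. apply (mg_sym HX); auto. }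
  assert (Hgadj : adj (act g x) (act g x1)) by (apply (act_adj Hact); auto).
  assert (Px : ~ P x). { unfold P, W. rewrite (dc_refl HX), (dc_adj HX _ _ Hxx1). lia. }
  assert (Px1 : P x1). { unfold P, W. rewrite (dc_refl HX), (dc_sym HX x1 x), (dc_adj HX _ _ Hxx1). lia. }
  assert (Pgx : P (act g x)). { unfold P, W. rewrite (dc_sym HX (act g x) x1), (dc_sym HX (act g x) x). lia. }
  assert (EgP : hs g P = W adj (act g x1) (act g x)) by (unfold P; apply (hs_W HX HG Hact)).
  assert (gPgx : ~ hs g P (act g x)). { rewrite EgP. unfold W. rewrite (dc_refl HX), (dc_adj HX _ _ Hgadj). lia. }
  assert (gPx1 : hs g P (act g x1)) by (apply (hs_at HG Hact); auto).
  assert (Hd1 : (d x1 (act g x1) <= d x (act g x))%nat).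
  { pose proof (dc_tri HX x1 (act g x) (act g x1)). rewrite (dc_adj HX _ _ Hgadj) in H. lia. }
  assert (Hd2 : d x1 (act g x1) = d x (act g x)). { pose proof (Hm x1). lia. }
  assert (gPx : ~ hs g P x).
  { intro H. destruct (classic (hs g P x1)) as [H1|H1].
    - rewrite EgP in H1. unfold W in H1.
      lia.
    - assert (E : hs g P = W adj x x1). { apply (halfspace_sep HX); [apply (hs_halfspace HX HG Hact); auto|apply (mg_sym HX); auto|auto|auto]. }
      rewrite <- (W_compl HX _ _ (mg_sym HX Hxx1)) in E. fold P in E.
      apply (RL1 HG Hact Hraag (a:=g) (b:=one) (halfspace_compl HX HP)).
      rewrite compl_compl, E, (hs_one HG Hact); auto. }
  split; auto.
  assert (NT : ~ transverse P (hs g P)).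
  { pose proof (RL2 HG Hact Hraag (a:=one) (b:=g) HP). rewrite (hs_one HG Hact) in H. auto. }
  apply NNPP in NT. destruct NT as [H|[H|[H|H]]].
  - exfalso. apply gPgx. apply H; auto.
  - exfalso. apply gPx. apply H; auto.
  - exfalso. assert (~ P (act g x1)) by (intro Hc; apply (H _ Hc); auto).
    assert (E : P = W adj (act g x) (act g x1)). { apply (halfspace_sep HX); auto. apply (mg_sym HX); auto. }
    rewrite <- (hs_W HX HG Hact) in E. rewrite <- (W_compl HX _ _ (mg_sym HX Hxx1)) in E. fold P in E.
    apply (RL1 HG Hact Hraag (a:=g) (b:=one) HP). rewrite (hs_one HG Hact). auto.
  - split. apply hsub_compl_inv; auto. intro E. apply gPgx. rewrite E; auto.
Qed.

Lemma skew_walk i : forall x u v k, minimal x -> walk adj x u i -> adj u v -> walk adj v (act g x) k ->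
  (i + 1 + k = d x (act g x))%nat -> hssub (hs g (W adj v u)) (W adj v u).
Proof.
  induction i as [|i IH]; intros x u v k Hm Hw Huv Hw2 Hk.
  - apply (walk0_eq) in Hw. subst u.
    assert (d v (act g x) + 1 = d x (act g x))%nat.
    { pose proof (dc_le HX Hw2). pose proof (dc_tri HX x v (act g x)). rewrite (dc_adj HX _ _ Huv) in H0. lia. }
    apply (skew_first Hm Huv H).
  - inversion Hw as [|? x1 ? ? Hxx1 Hw1]; subst.
    assert (H1 : (d x1 (act g x) + 1 = d x (act g x))%nat).
    { assert (W1 : walk adj x1 (act g x) (i + 1 + k)).
      { replace (i+1+k)%nat with (i + S k)%nat by lia. apply (walk_app Hw1). econstructor; eauto. }
      pose proof (dc_le HX W1). pose proof (dc_tri HX x x1 (act g x)). rewrite (dc_adj HX _ _ Hxx1) in H0. lia. }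
    destruct (skew_first Hm Hxx1 H1) as [_ H2].
    assert (Hm1 : minimal x1). { intro y. rewrite H2. apply Hm. }
    apply (IH x1 u v (S k) Hm1 Hw1 Huv).
    + eapply walk_snoc; eauto. apply (act_adj Hact); auto.
    + lia.
Qed.

Lemma skew x P : minimal x -> is_halfspace adj P -> ~ P x -> P (act g x) -> hssub (hs g P) P.
Proof.
  intros Hm HP Hx Hy.
  destruct (walk_cross (dc_walk HX x (act g x)) HP Hx Hy) as [i [u [v [k [A1 [A2 [A3 [A4 A5]]]]]]]].
  subst P. eapply skew_walk; eauto.
Qed.

End Skew.

Lemma last_nth A (l : list A) d : l <> [] -> last l d = nth (length l - 1) l d.
Proof.
  induction l as [|a l IH]; intro H. congruence.
  destruct l as [|b l]. reflexivity.
  change (last (a :: b :: l) d) with (last (b :: l) d). rewrite IH by discriminate.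
  simpl. replace (length l - 0)%nat with (length l) by lia. reflexivity.
Qed.

Lemma NoDup_map_inj A B (f : A -> B) l : NoDup l -> (forall x y, In x l -> In y l -> f x = f y -> x = y) -> NoDup (map f l).
Proof.
  induction 1 as [|a l Ha Hl IH]; intro Hi; simpl. constructor.
  constructor.
  - intro H. apply in_map_iff in H. destruct H as [x [E Hx]].
    assert (x = a) by (apply Hi; simpl; auto). subst. auto.
  - apply IH. intros; apply Hi; simpl; auto.
Qed.

Lemma nat_max_ex (P : nat -> Prop) B : (exists n, P n) -> (forall n, P n -> (n <= B)%nat) ->
  exists n, P n /\ forall m, P m -> (m <= n)%nat.
Proof.
  intros Hex HB.
  destruct (nat_min_ex (fun m => forall n, P n -> (n <= m)%nat)) as [m0 [H1 H2]].
  { exists B; auto. }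
  exists m0. split; auto.
  apply NNPP; intro Hn.
  destruct m0 as [|m0].
  - destruct Hex as [n Hn']. pose proof (H1 n Hn'). assert (n = 0%nat) by lia. subst. auto.
  - assert (forall n, P n -> (n <= m0)%nat).
    { intros n Hn'. pose proof (H1 n Hn'). destruct (Nat.eq_dec n (S m0)). subst; contradiction. lia. }
    pose proof (H2 m0 H). lia.
Qed.

Lemma extremal T (lt : T -> T -> Prop) (Hirr : forall x, ~ lt x x)
  (Htr : forall x y z, lt x y -> lt y z -> lt x z) (L : list T) :
  forall C : T -> Prop, (forall x, C x -> In x L) -> (exists x, C x) ->
  exists m, C m /\ forall y, C y -> ~ lt m y.
Proof.
  induction L as [|a L IH]; intros C HL Hex.
  - destruct Hex as [x Hx]. destruct (HL x Hx).
  - destruct (classic (exists x, C x /\ In x L)) as [Hc|Hc].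
    + destruct (IH (fun x => C x /\ In x L)) as [m' [[Cm' Im'] Hm']]; auto.
      intros x [_ Hx]; auto.
      destruct (classic (C a /\ lt m' a)) as [[Ca Hl]|Hn].
      * exists a. split; auto. intros y Cy Hay.
        destruct (HL y Cy) as [<-|Hy]. apply (Hirr a); auto.
        apply (Hm' y (conj Cy Hy)). eauto.
      * exists m'. split; auto. intros y Cy Hy.
        destruct (HL y Cy) as [<-|Hy']. apply Hn; auto.
        apply (Hm' y (conj Cy Hy')); auto.
    + exists a. destruct Hex as [x Cx]. 
      assert (Ha : forall y, C y -> y = a).
      { intros y Cy. destruct (HL y Cy) as [<-|Hy]; auto. exfalso; apply Hc; eauto. }
      rewrite <- (Ha x Cx). split; auto. intros y Cy. rewrite (Ha y Cy), <- (Ha x Cx). apply Hirr.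
Qed.

Lemma tight_chain_nth V (adj : V -> V -> Prop) d : forall l, tight_chain adj l -> forall i, (S i < length l)%nat ->
  tight_ssub adj (nth (S i) l d) (nth i l d).
Proof.
  induction l as [|a l IH]; intros Hc i Hi. simpl in Hi; lia.
  destruct l as [|b l]. simpl in Hi; lia.
  destruct Hc as [H1 H2]. destruct i as [|i]. simpl; auto.
  apply (IH H2 i). simpl in *; lia.
Qed.

Lemma tight_chain_snoc V (adj : V -> V -> Prop) : forall l y z, tight_chain adj (l ++ [y]) -> tight_ssub adj z y ->
  tight_chain adj (l ++ [y; z]).
Proof.
  induction l as [|a l IH]; intros y z H1 H2.
  - simpl. split; auto.
  - destruct l as [|b l].
    + simpl in *. destruct H1 as [H1 _]. split; auto.
    + simpl in H1 |- *. destruct H1 as [H1 H3]. split; auto.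
      specialize (IH y z H3 H2). simpl in IH. auto.
Qed.

Section Cseg.
Variable V : Type.
Variable adj : V -> V -> Prop.
Variable HX : median_graph adj.
Variable G : Type.
Variables (mul : G -> G -> G) (one : G) (inv : G -> G).
Variable HG : is_group mul one inv.
Variable act : G -> V -> V.
Variable Hact : is_action mul one adj act.

Lemma c_seg_spec gam x y B : (forall S, admissible_copies act gam x y S -> (length S <= B)%nat) ->
  (exists S, admissible_copies act gam x y S /\ length S = c_seg act gam x y) /\
  (forall S, admissible_copies act gam x y S -> (length S <= c_seg act gam x y)%nat).
Proof.
  intro HB. unfold c_seg. apply epsilon_spec.
  destruct (@nat_max_ex (fun n => exists S, admissible_copies act gam x y S /\ length S = n) B) as [n [H1 H2]].
  - exists 0%nat, []. split; auto. split. constructor. split; intros; simpl in *; contradiction.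
  - intros n [S [HS <-]]. auto.
  - exists n. split; auto. intros S HS. apply H2. eauto.
Qed.

Lemma adm_bound gam x y : gam <> [] -> Forall (is_halfspace adj) gam ->
  forall S, admissible_copies act gam x y S -> (length S <= dc adj x y)%nat.
Proof.
  intros Hne Hhs S [HN [HS HO]].
  destruct gam as [|P0 gam]. congruence.
  destruct (walk_halfspaces HX (dc_walk HX x y)) as [L [HL1 HL2]].
  rewrite <- HL1. replace (length S) with (length (map (hd (fun _ : V => False)) S)) by apply length_map.
  apply NoDup_incl_length.
  - apply NoDup_map_inj; auto. intros s t Hs Ht E. apply NNPP; intro Hst.
    apply (HO s t Hs Ht Hst). destruct (HS s Hs) as [[h ->] _]. destruct (HS t Ht) as [[h' ->] _].
    exists (hs_act act h P0), (hs_act act h' P0). simpl in *. auto.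
  - intros P HP. apply in_map_iff in HP. destruct HP as [s [<- Hs]].
    destruct (HS s Hs) as [[h ->] Hin]. simpl. apply HL2.
    + apply (hs_halfspace HX HG Hact). inversion Hhs; auto.
    + apply (Hin (hs_act act h P0)). simpl; auto.
    + apply (Hin (hs_act act h P0)). simpl; auto.
Qed.

Lemma c_seg_char gam x y : gam <> [] -> Forall (is_halfspace adj) gam ->
  (exists S, admissible_copies act gam x y S /\ length S = c_seg act gam x y) /\
  (forall S, admissible_copies act gam x y S -> (length S <= c_seg act gam x y)%nat).
Proof. intros H1 H2. apply (c_seg_spec (B := dc adj x y)). apply adm_bound; auto. Qed.

End Cseg.

Section Main.
Variable V : Type.
Variable adj : V -> V -> Prop.
Variable HX : median_graph adj.
Variable G : Type.
Variables (mul : G -> G -> G) (one : G) (inv : G -> G).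
Variable HG : is_group mul one inv.
Variable act : G -> V -> V.
Variable Hact : is_action mul one adj act.
Variable Hraag : raag_like adj act.
Variable g : G.
Variable o : V.
Variable Hmin : minimal adj act g o.

Notation hs := (hs_act act).
Notation gp := (gpow mul one).
Notation hsone := (hs_one HG Hact).
Notation hsmul := (hs_mul HG Hact).
Notation hsat := (hs_at HG Hact).
Notation hschar := (hs_char HG Hact).
Notation hshalf := (hs_halfspace HX HG Hact).

Definition pp s := act (gp g s) o.
Definition pm s := act (gp (inv g) s) o.

Lemma gpow_succ_r a n : gp a (S n) = mul (gp a n) a.
Proof.
  induction n as [|n IH]. simpl. rewrite (g_one_r HG), (g_one_l HG). auto.
  change (gp a (S (S n))) with (mul a (gp a (S n))). rewrite IH at 1. rewrite (g_assoc HG). reflexivity.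
Qed.

Lemma gpow_add a k m : gp a (k + m) = mul (gp a k) (gp a m).
Proof.
  induction k as [|k IH]; simpl. rewrite (g_one_l HG); auto.
  rewrite IH, (g_assoc HG). auto.
Qed.

Lemma pow_inv_cancel m : mul (gp g m) (gp (inv g) m) = one.
Proof.
  induction m as [|m IH]. simpl. apply (g_one_l HG).
  rewrite gpow_succ_r. simpl.
  rewrite <- (g_assoc HG). rewrite (g_assoc HG g), (g_inv_r HG), (g_one_l HG). auto.
Qed.

Lemma pp0 : pp 0 = o. Proof. unfold pp; simpl. apply (act_one Hact). Qed.
Lemma ppS s : pp (S s) = act g (pp s). Proof. unfold pp; simpl. apply (act_mul Hact). Qed.
Lemma pmS s : pm (S s) = act (inv g) (pm s). Proof. unfold pm; simpl. apply (act_mul Hact). Qed.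
Lemma g_pmS s : act g (pm (S s)) = pm s. Proof. rewrite pmS. apply (act_inv_r HG Hact). Qed.
Lemma pp_add k m : pp (k + m) = act (gp g k) (pp m).
Proof. unfold pp. rewrite gpow_add. apply (act_mul Hact). Qed.

Lemma hs_inv_char a Q z : hs (inv a) Q z <-> Q (act a z).
Proof.
  rewrite <- (act_inv_l HG Hact a z) at 1. apply hsat.
Qed.

Lemma hs_pow_inv_pp m : forall Q k, hs (gp (inv g) m) Q (pp k) <-> Q (pp (k + m)).
Proof.
  induction m as [|m IH]; intros Q k.
  - simpl. rewrite hsone, Nat.add_0_r. tauto.
  - simpl gp. rewrite hsmul, hs_inv_char, <- ppS, IH. replace (S k + m) with (k + S m) by lia. tauto.
Qed.

Definition Ax (Q : hspace V) := exists n, forall s, n <= s -> Q (pp s) /\ ~ Q (pm s).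

Lemma ax_cmp P Q : Ax P -> Ax Q -> nested P Q -> hsub P Q \/ hsub Q P.
Proof.
  intros [n1 H1] [n2 H2] HN.
  destruct (H1 (n1 + n2) ltac:(lia)) as [A1 A2]. destruct (H2 (n1 + n2) ltac:(lia)) as [B1 B2].
  eapply nested_cmp; eauto.
Qed.

Lemma ax_g Q : Ax Q -> Ax (hs g Q).
Proof.
  intros [n H]. exists (S n). intros s Hs. destruct s as [|s]. lia.
  split.
  - rewrite ppS. apply hsat. apply H; lia.
  - rewrite <- (g_pmS (S s)). rewrite hsat. apply H. lia.
Qed.

Lemma ax_ginv Q : Ax Q -> Ax (hs (inv g) Q).
Proof.
  intros [n H]. exists (S n). intros s Hs. destruct s as [|s]. lia.
  rewrite !hs_inv_char. rewrite <- ppS, g_pmS. split; apply H; lia.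
Qed.

Lemma ax_ginv_pow m Q : Ax Q -> Ax (hs (gp (inv g) m) Q).
Proof.
  induction m as [|m IH]; intro H. simpl; rewrite hsone; auto.
  simpl gp. rewrite hsmul. apply ax_ginv; auto.
Qed.

Lemma skew_pp Q N : hsub (hs g Q) Q -> Q (pp N) -> forall s, N <= s -> Q (pp s).
Proof.
  intros Hs HN s Hle. induction Hle as [|s Hle IH]; auto.
  rewrite ppS. apply Hs. apply hsat. auto.
Qed.

Lemma skew_pm Q : hsub (hs g Q) Q -> ~ Q o -> forall s, ~ Q (pm s).
Proof.
  intros Hs Ho s. induction s as [|s IH].
  - unfold pm; simpl. rewrite (act_one Hact). auto.
  - intro H. apply IH. rewrite <- g_pmS. apply Hs. apply hsat. auto.
Qed.

Lemma ax_skew Q N : hsub (hs g Q) Q -> ~ Q o -> Q (pp N) -> Ax Q.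
Proof.
  intros Hs Ho HN. exists N. intros s Hle. split. eapply skew_pp; eauto. apply skew_pm; auto.
Qed.

Lemma interval_step P N : ~ P (pp 0) -> P (pp N) -> exists m, m < N /\ ~ P (pp m) /\ P (pp (S m)).
Proof.
  induction N as [|N IH]; intros H0 HN. contradiction.
  destruct (classic (P (pp N))) as [H|H].
  - destruct (IH H0 H) as [m [A [B C]]]. exists m; split; auto.
  - exists N; auto.
Qed.

Lemma interval_skew P N : is_halfspace adj P -> ~ P o -> P (pp N) -> hsub (hs g P) P.
Proof.
  intros HP Ho HN. rewrite <- pp0 in Ho.
  destruct (interval_step P N Ho HN) as [m [_ [A B]]].
  set (T := hs (gp (inv g) m) P).
  assert (HT : is_halfspace adj T) by (apply hshalf; auto).
  assert (T1 : ~ T o). { rewrite <- pp0. unfold T. rewrite hs_pow_inv_pp. simpl. auto. }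
  assert (T2 : T (act g o)). { rewrite <- pp0, <- ppS. unfold T. rewrite hs_pow_inv_pp. simpl. auto. }
  pose proof (skew HX HG Hact Hraag Hmin HT T1 T2) as [Hs _].
  assert (EP : P = hs (gp g m) T). { unfold T. rewrite <- hsmul, pow_inv_cancel, hsone. auto. }
  rewrite EP. rewrite <- hsmul.
  change (mul g (gp g m)) with (gp g (S m)). rewrite gpow_succ_r, hsmul.
  apply (hs_sub HG Hact). auto.
Qed.

Variable gam : list (hspace V).
Variable Hgam : max_g_nested adj act g o gam.

Definition Dh : hspace V := fun _ => False.
Notation Phi i := (nth i gam Dh).
Notation len := (length gam).

Lemma gam_ne : gam <> [].
Proof. destruct Hgam as [[[H _] _] _]. auto. Qed.
Lemma len_pos : 0 < len.
Proof. pose proof gam_ne. destruct (length gam) eqn:E. apply length_zero_iff_nil in E. contradiction. lia. Qed.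

Lemma Phi_in i : i < len -> In (Phi i) gam.
Proof. apply nth_In. Qed.

Lemma Phi_hs i : i < len -> is_halfspace adj (Phi i).
Proof. intro H. destruct Hgam as [[[_ [Hf _]] _] _]. rewrite Forall_forall in Hf. apply Hf, Phi_in; auto. Qed.

Lemma Phi_int i : i < len -> ~ Phi i o /\ Phi i (act g o).
Proof. intro H. destruct Hgam as [[_ [Hin _]] _]. apply (Hin (Phi i)), Phi_in; auto. Qed.

Lemma Phi_tight i : S i < len -> tight_ssub adj (Phi (S i)) (Phi i).
Proof. intro H. destruct Hgam as [[[_ [_ Hc]] _] _]. apply tight_chain_nth; auto. Qed.

Lemma Phi_mono i j : i <= j -> j < len -> hsub (Phi j) (Phi i).
Proof.
  intros Hij Hj. induction Hij as [|j Hij IH]. intros x; auto.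
  eapply hsub_trans. apply (Phi_tight Hj). apply IH; lia.
Qed.

Lemma In_Phi P : In P gam -> exists i, i < len /\ P = Phi i.
Proof. intro H. destruct (In_nth gam P Dh H) as [i [A B]]. eauto. Qed.

Lemma hd_rev_last A (l : list A) d : l <> [] -> hd_error (rev l) = Some (last l d).
Proof. intro H. rewrite (app_removelast_last d H) at 1. rewrite rev_unit. auto. Qed.

Lemma hd_map_gam (f : hspace V -> hspace V) : hd_error (map f gam) = Some (f (Phi 0)).
Proof.
  assert (H : forall l : list (hspace V), l <> [] -> hd_error (map f l) = Some (f (nth 0 l Dh))).
  { intros [|a l] H; [congruence|auto]. }
  apply H, gam_ne.
Qed.

Definition rr := len - 1.

Lemma last_gam : last gam Dh = Phi rr.
Proof. apply last_nth, gam_ne. Qed.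

Lemma gt0 : hssub (hs g (Phi 0)) (Phi rr).
Proof.
  destruct Hgam as [[_ [_ [P [Q [H1 [H2 H3]]]]]] _].
  rewrite (hd_rev_last Dh gam_ne), last_gam in H1. unfold seg_act in H2. rewrite hd_map_gam in H2.
  congruence.
Qed.

Lemma rr_lt : rr < len. Proof. pose proof len_pos. unfold rr; lia. Qed.

Lemma Phi_gsub i j : i < len -> j < len -> hssub (hs g (Phi j)) (Phi i).
Proof.
  intros Hi Hj. eapply hssub_trans_r. apply (hs_sub HG Hact (P:=Phi j) (Q:=Phi 0)). apply Phi_mono; [lia|auto].
  eapply hssub_trans_l. apply gt0. apply Phi_mono. unfold rr; lia. apply rr_lt.
Qed.

Lemma Phi_skew i : i < len -> hsub (hs g (Phi i)) (Phi i).
Proof. intro H. apply (Phi_gsub H H). Qed.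

Lemma Phi_ax i : i < len -> Ax (Phi i).
Proof.
  intro H. apply (ax_skew (Q:=Phi i) 1). apply Phi_skew; auto. apply Phi_int; auto.
  rewrite ppS, pp0. apply Phi_int; auto.
Qed.


Lemma A_list : exists L : list (hspace V), forall P, is_halfspace adj P -> ~ P o -> P (act g o) -> In P L.
Proof.
  destruct (walk_halfspaces HX (dc_walk HX o (act g o))) as [L [_ HL]]. eauto.
Qed.

Lemma ext_bottom R : is_halfspace adj R -> tight_ssub adj R (Phi rr) -> ~ R o -> R (act g o) ->
  hssub (hs g (Phi 0)) R -> False.
Proof.
  intros HR Ht Ro Rg Hgt.
  destruct Hgam as [[[Hne [Hf Hc]] [Hin Hgt0]] Hmax].
  assert (E : gam ++ [R] = gam).
  { apply Hmax.
    - split; [split; [|split]|split].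
      + destruct gam; simpl; congruence.
      + apply Forall_app; split; auto.
      + rewrite (app_removelast_last Dh Hne) in Hc |- *. rewrite <- app_assoc. simpl.
        apply tight_chain_snoc; auto. rewrite last_gam. auto.
      + intros P HP. apply in_app_or in HP. destruct HP as [HP|[<-|[]]]; auto. split; auto.
      + exists R, (hs g (Phi 0)). split; [|split]; auto.
        rewrite rev_app_distr. auto.
        unfold seg_act. rewrite map_app.
        assert (H : forall l : list (hspace V), l <> [] -> hd_error (map (hs g) l ++ map (hs g) [R]) = Some (hs g (nth 0 l Dh))).
        { intros [|a l] H; [congruence|auto]. }
        apply H; auto.
    - intros P HP. apply in_or_app; auto. }
  apply (f_equal (@length _)) in E. rewrite length_app in E. simpl in E. lia.
Qed.

Lemma ext_top R : is_halfspace adj R -> tight_ssub adj (Phi 0) R -> ~ R o -> R (act g o) ->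
  hssub (hs g R) (Phi rr) -> False.
Proof.
  intros HR Ht Ro Rg Hgt.
  destruct Hgam as [[[Hne [Hf Hc]] [Hin Hgt0]] Hmax].
  assert (E : R :: gam = gam).
  { apply Hmax.
    - split; [split; [|split]|split].
      + congruence.
      + constructor; auto.
      + assert (H : forall l : list (hspace V), l <> [] -> tight_chain adj l -> tight_ssub adj (nth 0 l Dh) R ->
                  tight_chain adj (R :: l)).
        { intros [|a l] H1 H2 H3; [congruence|]. simpl. split; auto. }
        apply H; auto.
      + intros P [<-|HP]; auto. split; auto.
      + exists (Phi rr), (hs g R). split; [|split]; auto.
        simpl. rewrite <- last_gam. rewrite (app_removelast_last Dh Hne) at 1. rewrite rev_unit. auto.
    - intros P HP. right; auto. }
  apply (f_equal (@length _)) in E. simpl in E. lia.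
Qed.

Lemma final_step X : is_halfspace adj X -> hssub X (Phi rr) -> hssub (hs g (Phi 0)) X -> False.
Proof.
  intros HXh H1 H2.
  destruct A_list as [L HL].
  pose proof (Phi_int rr_lt) as [Pro Prg].
  pose proof (Phi_int len_pos) as [P0o P0g].
  destruct (classic (X (act g o))) as [Xg|Xg].
  - destruct (@extremal _ (@hssub V) (@hssub_irrefl V)
        (fun a b c h1 h2 => hssub_trans_l h1 (proj1 h2)) L
        (fun R => is_halfspace adj R /\ hssub R (Phi rr) /\ hsub X R)) as [m [[Hm1 [Hm2 Hm3]] Hm4]].
    + intros R [HR [A B]]. apply HL; auto. intro Ro. apply Pro. apply A; auto.
    + exists X. split; auto. split; auto. intros x; auto.
    + apply (ext_bottom (R := m)); auto.
      * split; auto. intros [R' [HR' [A B]]]. apply (Hm4 R'); auto.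
        split; auto. split; auto. eapply hsub_trans; eauto. apply A.
      * intro mo. apply Pro. apply Hm2; auto.
      * eapply hssub_trans_l; eauto.
  - set (T := hs (inv g) X).
    assert (HT : forall z, T z <-> X (act g z)) by (intro z; unfold T; apply hs_inv_char).
    assert (T0 : hssub (Phi 0) T).
    { unfold T. rewrite <- (hs_inv_l HG Hact g (Phi 0)). apply (hs_ssub HG Hact). auto. }
    destruct (@extremal _ (fun a b => hssub b a) (@hssub_irrefl V)
        (fun a b c h1 h2 => hssub_trans_l h2 (proj1 h1)) L
        (fun R => is_halfspace adj R /\ hssub (Phi 0) R /\ hsub R T)) as [m [[Hm1 [Hm2 Hm3]] Hm4]].
    + intros R [HR [A B]]. apply HL; auto.
      * intro Ro. apply B, HT in Ro. apply Xg. rewrite <- pp0 in Ro |- *. auto.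
      * apply A; auto.
    + exists T. split. apply hshalf; auto. split; auto. intros x; auto.
    + apply (ext_top (R := m)); auto.
      * split; auto. intros [R' [HR' [A B]]]. apply (Hm4 R'); auto.
        split; auto. split; auto. eapply hsub_trans; eauto. apply B.
      * intro mo. apply Hm3, HT in mo. apply Xg. auto.
      * apply (proj1 Hm2); auto.
      * eapply hssub_trans_r; [|apply H1].
        pose proof (hs_sub HG Hact (a:=g) Hm3) as Hm5. unfold T in Hm5. rewrite (hs_inv_r HG Hact) in Hm5. auto.
Qed.

Section Core2.
Variable h' : G.
Let Psi j := hs h' (hcompl (Phi j)).
Hypothesis H1a : hssub (Psi 0) (Phi 0).
Hypothesis H1b : hssub (hs g (Phi 0)) (Psi 0).
Hypothesis H2 : forall j, j < len -> Ax (Psi j).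

Lemma Psi_hs j : j < len -> is_halfspace adj (Psi j).
Proof. intro H. apply hshalf. apply (halfspace_compl HX). apply Phi_hs; auto. Qed.

Lemma cmp_same j : j < len -> hsub (Phi j) (Psi j) \/ hsub (Psi j) (Phi j).
Proof.
  intro H. apply ax_cmp. apply Phi_ax; auto. apply H2; auto.
  apply NNPP. intro T. apply (RL2c HG Hact Hraag (a:=one) (b:=h') (Phi_hs H)).
  rewrite hsone. auto.
Qed.

Lemma cmp_next j : S j < len -> hsub (Phi (S j)) (Psi j) \/ hsub (Psi j) (Phi (S j)).
Proof.
  intro H. apply ax_cmp. apply Phi_ax; auto. apply H2; lia.
  apply NNPP. intro T. apply (RL3c HG Hact Hraag (a:=one) (b:=h') (Phi_hs H) (Phi_hs (i:=j) ltac:(lia)) (Phi_tight H)).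
  rewrite hsone. auto.
Qed.

Lemma neq_same j : j < len -> Psi j <> Phi j.
Proof. intros H E. apply (RL1 HG Hact Hraag (a:=h') (b:=one) (Phi_hs H)). rewrite hsone. auto. Qed.

Lemma neq_next j : S j < len -> Psi j <> Phi (S j).
Proof.
  intros H E. apply (RL4 HX HG Hact Hraag (a:=h') (b:=one) (Phi_hs (i:=j) ltac:(lia)) (Phi_hs H) (Phi_tight H)).
  rewrite hsone. auto.
Qed.

Lemma tight_psi j : S j < len -> tight_ssub adj (Psi j) (Psi (S j)).
Proof. intro H. apply (hs_tight HX HG Hact). apply (tight_compl HX). apply Phi_tight; auto. Qed.

Lemma ssub_of_sub (P Q : hspace V) : hsub P Q -> P <> Q -> hssub P Q.
Proof. intros; split; auto. Qed.

Lemma core_claim j : j < len -> hssub (Psi j) (Phi j) /\ hsub (Psi 0) (Psi j).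
Proof.
  induction j as [|j IH]; intro Hj.
  - split; auto. intros x; auto.
  - destruct (IH ltac:(lia)) as [A B].
    assert (C : hssub (Psi j) (Phi (S j))).
    { destruct (cmp_next Hj) as [D|D].
      - exfalso. destruct (Phi_tight Hj) as [_ T]. apply T. exists (Psi j). split. apply Psi_hs; lia.
        split; auto. apply ssub_of_sub; auto. intro E. apply (neq_next Hj); auto.
      - apply ssub_of_sub; auto. apply neq_next; auto. }
    split.
    + destruct (cmp_same Hj) as [D|D].
      * exfalso. destruct (tight_psi Hj) as [_ T]. apply T. exists (Phi (S j)). split. apply Phi_hs; auto.
        split; auto. apply ssub_of_sub; auto. intro E. apply (neq_same Hj); auto.
      * apply ssub_of_sub; auto. apply neq_same; auto.
    + eapply hsub_trans; eauto. apply (tight_psi Hj).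
Qed.

Lemma core2 : False.
Proof.
  destruct (core_claim rr_lt) as [A B].
  apply (final_step (X := Psi 0)). apply Psi_hs, len_pos.
  eapply hssub_trans_r; eauto. auto.
Qed.
End Core2.

Lemma core h N : (forall j, j < len -> ~ hs h (hcompl (Phi j)) o /\ hs h (hcompl (Phi j)) (pp N)) -> False.
Proof.
  intro Hh.
  set (Psi := fun j => hs h (hcompl (Phi j))).
  assert (Hhs : forall j, j < len -> is_halfspace adj (Psi j)).
  { intros j Hj. apply hshalf. apply (halfspace_compl HX). apply Phi_hs; auto. }
  assert (Hax : forall j, j < len -> Ax (Psi j)).
  { intros j Hj. destruct (Hh j Hj) as [A B]. apply (ax_skew (Q := Psi j) N); auto.
    apply (interval_skew N); auto. }
  pose proof len_pos as Hl.
  destruct (Hh 0 Hl) as [A0 B0]. rewrite <- pp0 in A0.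
  destruct (interval_step _ _ A0 B0) as [m [_ [C0 D0]]].
  set (a := gp (inv g) m). set (h1 := mul a h).
  set (T := hs h1 (hcompl (Phi 0))).
  assert (ET : T = hs a (Psi 0)). { unfold T, h1, Psi. apply hsmul. }
  assert (HT : is_halfspace adj T). { rewrite ET. apply hshalf. apply Hhs; auto. }
  assert (T1 : ~ T o). { rewrite <- pp0. rewrite ET. unfold a. rewrite hs_pow_inv_pp. simpl. auto. }
  assert (T2 : T (act g o)). { rewrite <- pp0, <- ppS. rewrite ET. unfold a. rewrite hs_pow_inv_pp. simpl. auto. }
  assert (Hax1 : forall j, j < len -> Ax (hs h1 (hcompl (Phi j)))).
  { intros j Hj. unfold h1. rewrite hsmul. apply ax_ginv_pow. apply Hax; auto. }
  assert (HTax : Ax T) by (apply Hax1; auto).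
  assert (TneP : T <> Phi 0).
  { intro E. apply (RL1 HG Hact Hraag (a:=h1) (b:=one) (Phi_hs Hl)). rewrite hsone. auto. }
  pose proof (Phi_int Hl) as [P0o P0g].
  destruct (ax_cmp (Phi_ax Hl) HTax) as [D|D].
  { apply NNPP. intro Tr. apply (RL2c HG Hact Hraag (a:=one) (b:=h1) (Phi_hs Hl)). rewrite hsone. auto. }
  -
    set (h2 := mul g h1).
    apply (core2 (h' := h2)).
    + unfold h2. rewrite hsmul. fold T. split.
      * destruct (ax_cmp (Phi_ax Hl) (ax_g HTax)) as [E|E]; auto.
        { apply NNPP. intro Tr. apply (RL2c HG Hact Hraag (a:=one) (b:=h2) (Phi_hs Hl)). rewrite hsone.
          unfold h2. rewrite hsmul. fold T. auto. }
        exfalso. apply T1. apply (hsat g T o). apply E; auto.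
      * intro E. apply (RL1 HG Hact Hraag (a:=h2) (b:=one) (Phi_hs Hl)). rewrite hsone.
        unfold h2. rewrite hsmul. fold T. auto.
    + unfold h2. rewrite hsmul. fold T. apply (hs_ssub HG Hact). split; auto.
    + intros j Hj. unfold h2. rewrite hsmul. apply ax_g. apply Hax1; auto.
  -
    apply (core2 (h' := h1)).
    + fold T. split; auto.
    + fold T. destruct (ax_cmp (ax_g (Phi_ax Hl)) HTax) as [E|E].
      { apply NNPP. intro Tr. apply (RL2c HG Hact Hraag (a:=g) (b:=h1) (Phi_hs Hl)). auto. }
      * split; auto. intro E2. apply (RL1 HG Hact Hraag (a:=h1) (b:=g) (Phi_hs Hl)). fold T. auto.
      * exfalso. apply E in T2. apply hsat in T2. auto.
    + auto.
Qed.

Lemma rev_zero N : c_seg act (seg_rev gam) o (pp N) = 0.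
Proof.
  assert (Hne : seg_rev gam <> []).
  { unfold seg_rev. intro E. apply map_eq_nil in E. apply gam_ne. 
    rewrite <- (rev_involutive gam), E. auto. }
  assert (Hf : Forall (is_halfspace adj) (seg_rev gam)).
  { unfold seg_rev. apply Forall_forall. intros P HP. apply in_map_iff in HP.
    destruct HP as [Q [<- HQ]]. apply (halfspace_compl HX). apply <- in_rev in HQ.
    destruct (In_Phi _ HQ) as [i [Hi ->]]. apply Phi_hs; auto. }
  destruct (c_seg_char HX HG Hact o (pp N) Hne Hf) as [[S [HS HL]] _].
  rewrite <- HL. destruct S as [|s S]; auto.
  exfalso. destruct HS as [_ [HS _]]. destruct (HS s (or_introl eq_refl)) as [[h ->] Hin].
  apply (core (h:=h) (N:=N)). intros j Hj. apply (Hin (hs h (hcompl (Phi j)))).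
  unfold seg_act, seg_rev. apply in_map. apply in_map. apply -> in_rev. apply Phi_in; auto.
Qed.

Definition copy k := seg_act act (gp g k) gam.

Lemma in_copy k Q : In Q (copy k) -> exists i, i < len /\ Q = hs (gp g k) (Phi i).
Proof.
  unfold copy, seg_act. intro H. apply in_map_iff in H. destruct H as [P [<- HP]].
  destruct (In_Phi _ HP) as [i [Hi ->]]. eauto.
Qed.

Lemma chainS k : forall i j, i < len -> j < len -> hssub (hs (gp g (S k)) (Phi j)) (hs (gp g k) (Phi i)).
Proof.
  induction k as [|k IH]; intros i j Hi Hj.
  - simpl gp. rewrite hsmul, !hsone. apply Phi_gsub; auto.
  - change (gp g (S (S k))) with (mul g (gp g (S k))). change (gp g (S k)) with (mul g (gp g k)) at 2.
    rewrite !hsmul. apply (hs_ssub HG Hact). apply IH; auto.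
Qed.

Lemma copy_mono m : forall k i, i < len -> hsub (hs (gp g (m + k)) (Phi i)) (hs (gp g k) (Phi i)).
Proof.
  induction m as [|m IH]; intros k i Hi. intros x; auto.
  eapply hsub_trans. apply (chainS (m + k) Hi Hi). apply IH; auto.
Qed.

Lemma copy_lt k k' i j : k < k' -> i < len -> j < len -> hssub (hs (gp g k') (Phi j)) (hs (gp g k) (Phi i)).
Proof.
  intros Hk Hi Hj. replace k' with ((k' - S k) + S k) by lia.
  eapply hssub_trans_r. apply copy_mono; auto. apply chainS; auto.
Qed.

Lemma copy_int k N i : k < N -> i < len -> ~ hs (gp g k) (Phi i) o /\ hs (gp g k) (Phi i) (pp N).
Proof.
  intros Hk Hi. split.
  - intro H. pose proof (copy_mono k 0 Hi) as M. rewrite Nat.add_0_r in M.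
    apply M in H. simpl gp in H. rewrite hsone in H. apply (Phi_int Hi); auto.
  - replace N with (k + (N - k)) by lia. rewrite pp_add. apply hsat.
    apply (skew_pp (Phi_skew Hi) (N := 1)). rewrite ppS, pp0. apply Phi_int; auto. lia.
Qed.

Lemma copies_lb N : N <= c_seg act gam o (pp N).
Proof.
  destruct Hgam as [[[Hne [Hf _]] _] _].
  destruct (c_seg_char HX HG Hact o (pp N) Hne Hf) as [_ Hmax].
  replace N with (length (map copy (seq 0 N))) at 1 by (rewrite length_map, length_seq; auto).
  apply Hmax. split; [|split].
  - apply NoDup_map_inj. apply seq_NoDup. intros k k' Hk Hk' E.
    apply NNPP; intro Hne'.
    pose proof len_pos as Hl.
    assert (Hin : In (hs (gp g k') (Phi 0)) (copy k)).
    { rewrite E. unfold copy, seg_act. apply in_map, Phi_in; auto. }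
    destruct (in_copy _ _ Hin) as [i [Hi Ei]].
    destruct (Nat.lt_gt_cases k k') as [[L|L] _]; auto.
    + pose proof (copy_lt L Hi Hl). rewrite <- Ei in H. apply (hssub_irrefl H).
    + pose proof (copy_lt L Hl Hi). rewrite <- Ei in H. apply (hssub_irrefl H).
  - intros s Hs. apply in_map_iff in Hs. destruct Hs as [k [<- Hk]]. apply in_seq in Hk.
    split. exists (gp g k); auto.
    intros Q HQ. destruct (in_copy _ _ HQ) as [i [Hi ->]]. apply copy_int; lia.
  - intros s t Hs Ht Hst [P [Q [HP [HQ E]]]].
    apply in_map_iff in Hs. destruct Hs as [k [<- Hk]].
    apply in_map_iff in Ht. destruct Ht as [k' [<- Hk']].
    destruct (in_copy _ _ HP) as [i [Hi ->]]. destruct (in_copy _ _ HQ) as [j [Hj ->]].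
    destruct (Nat.lt_trichotomy k k') as [L|[L|L]].
    + pose proof (copy_lt L Hi Hj) as C. destruct E as [E|E].
      * rewrite E in C. apply (hssub_irrefl C).
      * apply E. right; right; right. apply hsub_compl. apply C.
    + subst. auto.
    + pose proof (copy_lt L Hj Hi) as C. destruct E as [E|E].
      * rewrite E in C. apply (hssub_irrefl C).
      * apply E. left. apply C.
Qed.

Lemma main_counts N : N <= c_seg act gam o (act (gpow mul one g N) o) /\
  c_seg act (seg_rev gam) o (act (gpow mul one g N) o) = 0.
Proof. split. apply copies_lb. apply rev_zero. Qed.

End Main.

Unset Implicit Arguments.
Open Scope R_scope.

Lemma delta_min (V : Type) (adj : V -> V -> Prop) (G : Type) (act : G -> V -> V) g (o : V) :
  forall x, (delta adj act g <= dc adj x (act g x))%nat.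
Proof.
  unfold delta.
  assert (H : exists n, (exists x, dc adj x (act g x) = n) /\ forall x, (n <= dc adj x (act g x))%nat).
  { destruct (nat_min_ex (fun n => exists x, dc adj x (act g x) = n)) as [n [[x Hx] Hm]].
    - exists (dc adj o (act g o)), o; auto.
    - exists n. split. eauto. intro y. apply Hm. eauto. }
  pose proof (epsilon_spec (inhabits 0%nat) _ H) as [_ H2]. exact H2.
Qed.

Theorem theorem5p6
  (V : Type) (adj : V -> V -> Prop) (HX : median_graph adj)
  (G : Type) (mul : G -> G -> G) (one : G) (inv : G -> G)
  (HG : is_group mul one inv)
  (act : G -> V -> V) (Hact : is_action mul one adj act)
  (Hraag : raag_like adj act)
  (g : G) (Hhyp : hyperbolic adj act g)
  (o : V) (Ho : dc adj o (act g o) = delta adj act g)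
  (gam : list (hspace V)) (Hgam : max_g_nested adj act g o gam) :
  let u := fun n : nat =>
             phi act gam o (gpow mul one g (S n)) / INR (S n) in
  (forall L, Un_cv u L -> 1 <= L) /\
  (forall eps, 0 < eps -> exists N, forall n, (n >= N)%nat -> 1 - eps <= u n).
Proof.
  intro u.
  assert (Hmin : minimal adj act g o).
  { intro y. rewrite Ho. apply (delta_min V adj G act g o). }
  assert (Hu : forall n, 1 <= u n).
  { intro n. unfold u, phi, omega.
    destruct (main_counts HX HG Hact Hraag Hmin Hgam (S n)) as [A B].
    rewrite B. simpl INR at 2. apply le_INR in A.
    assert (Hp : 0 < INR (S n)) by (apply lt_0_INR; lia).
    apply (Rmult_le_reg_r (INR (S n))); auto. unfold Rdiv.
    rewrite Rmult_assoc, Rinv_l by lra. lra. }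
  split.
  - intros L HL. apply Rnot_lt_le. intro H.
    destruct (HL (1 - L)) as [N HN]. lra.
    specialize (HN N (le_n N)). unfold R_dist in HN.
    pose proof (Rle_abs (u N - L)). pose proof (Hu N). lra.
  - intros eps Heps. exists 0%nat. intros n _. pose proof (Hu n). lra.
Qed.
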